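(* Let $N\ge2$ and let $a_1,\dots,a_m$ be transpositions in $S_N$ each of the form $(\alpha,N)$ with $1\le\alpha\le N-1$. Suppose that for some $k$ we have $a_k\ne a_i$ for all $i\ne k$. Let $\sigma_1=a_1\cdots a_{k-1}$ and $\sigma_2=a_{k+1}\cdots a_m$. Then $|\sigma_1a_k\sigma_2|=|\sigma_1\sigma_2|+1$.
   Context: For a permutation $\sigma$, its length $|\sigma|$ is the minimal number of transpositions whose product is $\sigma$ (equivalently, $N$ minus the number of cycles of $\sigma$, fixed points included). Empty products are the identity. *)

(* Defs.v *)
From mathcomp Require Import all_boot all_order all_fingroup.
Set Implicit Arguments. Unset Strict Implicit. Unset Printing Implicit Defensive.

(* Length of a permutation of 'I_N: N minus the number of cycles
   (fixed points included); porbits s is the set of cycles of s. *)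
Definition plen (N : nat) (s : {perm 'I_N}) : nat := N - #|porbits s|.

(* Main.v *)
Require Import Defs.
From mathcomp Require Import all_boot all_order all_fingroup.
From mathcomp Require Import zify.

Lemma fixed_pow (T : finType) (s : {perm T}) x : s x = x -> forall i, (s ^+ i)%g x = x.
Proof. by move=> hx; elim=> [|i IH]; rewrite ?expg0 ?perm1 // expgSr permM IH hx. Qed.

Theorem lemma3 (N : nat) (hN : 2 <= N) (top : 'I_N) (htop : val top = N.-1)
  (m : nat) (alpha : 'I_m -> 'I_N) (halpha : forall i, val (alpha i) < N.-1)
  (k : 'I_m)
  (hk : forall i : 'I_m, i != k -> tperm (alpha i) top != tperm (alpha k) top) :
  let a := fun i : 'I_m => tperm (alpha i) top in
  let s1 := \big[mulg/1%g]_(i < m | val i < val k) a i in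
  let s2 := \big[mulg/1%g]_(i < m | val k < val i) a i in
  plen (s1 * a k * s2)%g = (plen (s1 * s2)%g).+1.
Proof.
move=> a s1 s2.
set x := alpha k.
have xtop : x != top by rewrite -val_eqE /= htop neq_ltn halpha.
have fixi : forall i, i != k -> a i x = x.
  move=> i ik; apply: tpermD; last by rewrite eq_sym.
  apply: contra (hk i ik) => /eqP ->; by [].
have fixP : forall P : pred 'I_m, (forall i, P i -> i != k) ->
    (\big[mulg/1%g]_(i < m | P i) a i) x = x.
  move=> P HP; apply: (big_ind (fun p : {perm 'I_N} => p x = x)).
  - by rewrite perm1.
  - by move=> p q hp hq; rewrite permM hp hq.
  - by move=> i /HP; apply: fixi.
have h1 : s1 x = x by apply: fixP => i; rewrite neq_ltn => ->.
have h2 : s2 x = x by apply: fixP => i; rewrite neq_ltn => ->; rewrite orbT.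
set pi := (s1 * s2)%g.
have hpi : pi x = x by rewrite permM h1 h2.
have h1V : (s1^-1)%g x = x by rewrite -{1}h1 permK.
set y := (s1^-1)%g top.
have yx : x != y.
  apply/eqP => exy; move/eqP: xtop; apply; by rewrite -[top](permKV s1) -/y -exy h1.
have eq : (s1 * a k * s2 = tperm x y * pi)%g.
  have -> : tperm x y = ((a k) ^ (s1^-1))%g by rewrite tpermJ h1V.
  by rewrite /pi /conjg invgK !mulgA -(mulgA _ (s1^-1)%g s1) mulVg mulg1.
have nin : x \notin porbit pi y.
  rewrite porbit_sym; apply/negP => /porbitP [i].
  rewrite fixed_pow // => /eqP; by rewrite eq_sym (negbTE yx).
have := porbits_mul_tperm pi x y; rewrite nin yx /= -eq.
have cle : #|porbits pi| <= N.
  by apply: leq_trans (leq_imset_card _ _) _; rewrite card_ord.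
rewrite /plen => H.
move: H cle; set c1 := #|porbits (s1 * a k * s2)%g|; set c2 := #|porbits pi|; rewrite (_ : 1.*2 = 2) //; lia.
Qed.
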